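(* Let $T$ be an oriented tree and $U=\{v\in V(T):\deg^-_T(v)\geq 2\}$. Suppose that $T$ is grounded, that the minimal subtree of $T$ containing $U$ is an out-arborescence, that $|U|\geq 2$, and that $T$ has no leaf of in-degree $1$. Then there exist integers $k\ge 1$ and $\ell\ge 1$ such that $T$ is isomorphic to a subgraph of $T(k,\ell)$.
   Context: An oriented tree is an orientation of an undirected tree. For an oriented tree $T$, a height function $h_T\colon V(T)\to\mathbb{Z}$ satisfies $h_T(v)=h_T(u)+1$ for every edge $(u,v)\in E(T)$ (unique up to an additive constant); $T$ is grounded if $h_T$ is constant on the vertices of in-degree at least $2$. An out-arborescence is an oriented tree with all edges oriented away from a designated root. $B^+_{k,\ell}$ is the complete $\ell$-ary tree of depth $k$ (distance from root to leaves $k$) with all edges oriented away from the root. $S^-_{k,\ell}$ is the $(k-1)$-subdivision of the in-star with $\ell$ leaves: a centre vertex together with $\ell$ directed paths of length $k$ ending at the centre, pairwise sharing only the centre. $T(k,\ell)$ is the oriented tree obtained from $B^+_{k,\ell}$ by identifying each leaf with the centre of a new (disjoint) copy of $S^-_{k,\ell}$. *)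

(* Defs.v *)
From mathcomp Require Import all_boot all_order all_algebra.
Set Implicit Arguments. Unset Strict Implicit. Unset Printing Implicit Defensive.
Import GRing.Theory Num.Theory.

Section OrientedTrees.
Variable V : finType.
Variable E : rel V.

Definition adj : rel V := fun u v => E u v || E v u.

Definition indeg (v : V) : nat := #|[set u | E u v]|.
Definition deg (v : V) : nat := #|[set u | adj u v]|.

Definition oriented_tree : Prop :=
  [/\ irreflexive E,
      (forall u v, E u v -> ~~ E v u),
      (forall u v, connect adj u v) &
      (forall s : seq V, uniq s -> 3 <= size s -> ~~ cycle adj s)].

Definition Uset : {set V} := [set v | 2 <= indeg v].

Definition height_fun (h : V -> int) : Prop :=
  forall u v, E u v -> h v = (h u + 1)%R.

Definition grounded : Prop :=
  exists h : V -> int, height_fun h /\ {in Uset &, forall u v, h u = h v}.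

Definition connected_in (W : {set V}) : bool :=
  [forall u in W, forall v in W,
     connect (fun x y => [&& x \in W, y \in W & adj x y]) u v].

Definition min_subtree (A : {set V}) : {set V} :=
  \bigcap_(W : {set V} | (A \subset W) && connected_in W) W.

Definition out_arborescence_on (S : {set V}) : Prop :=
  exists2 r, r \in S &
    forall v, v \in S -> connect (fun x y => [&& x \in S, y \in S & E x y]) r v.

Definition leaf (v : V) : bool := deg v == 1.
End OrientedTrees.

(* Vertices are triples (w, j, t) with w : seq nat.
   - (w, 0, 0) with size w <= k, entries < l : vertex w of B^+_{k,l}
     (root = [::], children of w are rcons w i, i < l);
   - (w, j, t) with size w = k, j < l, 1 <= t <= k : the vertex at distance t
     from the centre w on the j-th path of the copy of S^-_{k,l} glued at
     the leaf w. *)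
Definition Tvert (k l : nat) (x : seq nat * nat * nat) : bool :=
  let: (w, j, t) := x in
  [&& all (fun i => i < l) w, size w <= k &
      if t == 0 then j == 0 else [&& size w == k, j < l & t <= k]].

Definition Tedge (k l : nat) (x y : seq nat * nat * nat) : Prop :=
  Tvert k l x /\ Tvert k l y /\
  let: (w, j, t) := x in let: (w', j', t') := y in
  [\/ (t = 0 /\ t' = 0 /\ exists2 i, i < l & w' = rcons w i),
      (t = 1 /\ t' = 0 /\ w' = w) |
      (1 <= t' /\ t = t'.+1 /\ w' = w /\ j' = j)].

Definition embeds_in_T (V : finType) (E : rel V) (k l : nat) : Prop :=
  exists f : V -> seq nat * nat * nat,
    [/\ injective f, (forall v, Tvert k l (f v)) &
        (forall u v, E u v -> Tedge k l (f u) (f v))].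

(* Main.v *)
Require Import Defs.
From mathcomp Require Import all_boot all_order all_algebra.
From mathcomp Require Import zify.
Set Implicit Arguments. Unset Strict Implicit. Unset Printing Implicit Defensive.
Import Order.TTheory GRing.Theory Num.Theory.

Section Pf.
Variable V : finType.
Variable E : rel V.
Hypothesis tree : oriented_tree E.
Variable h : V -> int.
Hypothesis hf : height_fun E h.
Variable H : int.
Hypothesis HU : forall u, u \in Uset E -> h u = H.
Variable r : V.
Hypothesis hr : forall u, u \in Uset E -> connect E r u.
Hypothesis U2 : 1 < #|Uset E|.
Hypothesis leafh : forall v, leaf E v -> indeg E v != 1.

Local Notation U := (Uset E).
Definition sink x := [forall y, ~~ E x y].

Lemma path_h x p : path E x p -> h (last x p) = (h x + (size p)%:Z)%R.
Proof.
elim: p x => [|y p IH] x /=; first by rewrite GRing.addr0.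
move=> /andP[exy py]; rewrite IH // (hf exy); lia.
Qed.

Lemma conn_h x y : connect E x y -> x = y \/ (h x < h y)%R.
Proof.
move=> /connectP[p px ->]; have := path_h px.
case: p px => [|z p] /= px; first by left.
by move=> ->; right; lia.
Qed.

Lemma conn_le x y : connect E x y -> (h x <= h y)%R.
Proof. by case/conn_h => [->|]; [|move/Order.POrderTheory.ltW]. Qed.

Lemma conn_eqh x y : connect E x y -> h x = h y -> x = y.
Proof. by case/conn_h => // lt eq; move: lt; rewrite eq ltxx. Qed.

Lemma sink_conn s x : sink s -> connect E s x -> x = s.
Proof.
move=> /forallP sk /connectP[[|y p] /= px ->] //.
by move: px; rewrite (negbTE (sk y)).
Qed.

Lemma reach_sink v : exists2 s, connect E v s & sink s.
Proof.
have := @arg_maxnP V v (connect E v) (fun x => absz (h x - h v)) (connect0 _ _).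
case=> s vs smax; exists s => //.
apply/forallP => y; apply/negP => esy.
have vy : connect E v y := connect_trans vs (connect1 esy).
have := smax y vy; have := conn_le vs; have := hf esy; lia.
Qed.

Lemma U_elt : exists u, u \in U.
Proof. by case/card_gt1P: U2 => u [u' [uU _ _]]; exists u. Qed.

Lemma sink_U s : sink s -> s \in U.
Proof.
move=> sk; apply/negPn/negP => sU.
case: U_elt => u uU.
have su : s != u by apply/eqP => esu; rewrite esu uU in sU.
case: tree => _ _ conn _.
case/connectP: (conn s u) => [[|y p]] /=; first by move=> _ eu; rewrite eu eqxx in su.
move=> /andP[asy _] _.
have eys : E y s.
  by move: asy; rewrite /adj; move/forallP: sk => sk; rewrite (negbTE (sk y)).
have degE : deg E s = indeg E s.
  rewrite /deg /indeg; apply: eq_card => x; rewrite !inE /adj.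
  by move/forallP: sk => sk; rewrite (negbTE (sk x)) orbF.
have : 0 < indeg E s by apply/card_gt0P; exists y; rewrite inE.
move: sU; rewrite /Uset inE -ltnNge ltnS => le1 ge1.
have i1 : indeg E s = 1 by apply/eqP; rewrite eqn_leq le1 ge1.
have := leafh (v := s); rewrite /leaf degE i1 eqxx => /(_ isT).
by [].
Qed.

Lemma U_sink u : u \in U -> sink u.
Proof.
move=> uU; apply/forallP => y; apply/negP => euy.
case: (reach_sink y) => s ys sk.
have := conn_le ys; have := HU (sink_U sk); have := HU uU; have := hf euy.
lia.
Qed.

Lemma reachU v : exists2 u, u \in U & connect E v u.
Proof. by case: (reach_sink v) => s vs sk; exists s => //; apply: sink_U. Qed.

Lemma h_le v : (h v <= H)%R.
Proof. by case: (reachU v) => u uU vu; rewrite -(HU uU); apply: conn_le. Qed.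

Lemma h_lt v : v \notin U -> (h v < H)%R.
Proof.
case: (reachU v) => u uU vu vU; rewrite -(HU uU).
by case: (conn_h vu) => // evu; rewrite evu uU in vU.
Qed.

Lemma arc_notU v y : E v y -> v \notin U.
Proof.
move=> evy; apply/negP => /U_sink /forallP /(_ y); by rewrite evy.
Qed.


Definition Rz z : rel V := fun a b => [&& adj E a b, a != z & b != z].

Lemma Rz_sym z : symmetric (Rz z).
Proof. by move=> a b; rewrite /Rz /adj orbC; case: (a != z); case: (b != z); rewrite ?andbF. Qed.

Lemma path_Rz_all z x q : path (Rz z) x q -> all (fun b => b != z) q.
Proof.
elim: q x => //= y q IH x /andP[/and3P[_ _ yz] pq].
by rewrite yz (IH y).
Qed.

Lemma tree_lemma y1 y2 z : E y1 z -> E y2 z -> connect (Rz z) y1 y2 -> y1 = y2.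
Proof.
move=> e1 e2 /connectP[p pp ly]; subst y2.
case/shortenP: pp e2 => q pq uq _ e2; apply/eqP/negPn/negP => y12.
case: tree => irr _ _ acyc.
have y1z : y1 != z by apply/eqP => ez; move: e1; rewrite ez irr.
have qz := path_Rz_all pq.
have zq : z \notin y1 :: q.
  rewrite inE negb_or eq_sym y1z /=; apply/negP => zin.
  by move/allP: qz => /(_ z zin); rewrite eqxx.
case: q pq uq e2 y12 qz zq => [|a q] pq uq e2 y12 qz zq; first by rewrite /= eqxx in y12.
have := acyc [:: z, y1, a & q].
rewrite [uniq (z :: _)]cons_uniq zq uq /= => /(_ isT isT).
rewrite rcons_path.
have -> : adj E z y1 by rewrite /adj e1 orbT.
have pq' : path (adj E) y1 (a :: q) by apply: sub_path pq => u v /and3P[].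
move: pq' => /= /andP[-> ->]; rewrite /=.
by move: e2 => /= e2; rewrite /adj e2.
Qed.

Lemma connE_Rz z a b : z \in U -> connect E a b -> b != z -> connect (Rz z) a b.
Proof.
move=> zU /connectP[p pp ->]; elim: p a pp => [|y p IH] a /=; first by rewrite connect0.
move=> /andP[eay pp] lz.
have yz : y != z.
  apply/eqP => eyz; subst y.
  have : connect E z (last z p) by apply/connectP; exists p.
  by move/(sink_conn (U_sink zU)) => el; rewrite el eqxx in lz.
have az : a != z by apply/eqP => eaz; subst a; move: (arc_notU eay); rewrite zU.
apply: connect_trans (IH y pp lz); apply: connect1.
by rewrite /Rz /adj eay az yz.
Qed.

Lemma indeg_uniq y y' z : E y z -> E y' z -> z \notin U -> y = y'.
Proof.
move=> e1 e2 zU; apply/eqP/negPn/negP => yy.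
move: zU; rewrite /Uset inE /indeg -ltnNge ltnS => le1.
have : #|[set y; y']| <= #|[set u | E u z]|.
  by apply: subset_leq_card; apply/subsetP => x; rewrite !inE => /orP[]/eqP->.
by rewrite cards2 yy => /leq_trans /(_ le1).
Qed.

Lemma last_step v u : connect E v u -> v != u -> exists2 y, connect E v y & E y u.
Proof.
move=> /connectP[p pp ->]; case/lastP: p pp => [|q y]; first by rewrite eqxx.
rewrite rcons_path last_rcons => /andP[pq ey] _.
by exists (last v q) => //; apply/connectP; exists q.
Qed.

Lemma chain_aux n x y px py : size px + size py <= n ->
  path E x px -> path E y py -> last x px = last y py -> last x px \notin U ->
  connect E x y || connect E y x.
Proof.
elim: n x y px py => [|n IH] x y px py.
  case: px py => [|? ?] [|? ?] //= _ _ _ exy _; by rewrite exy connect0.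
case/lastP: px => [|px a].
  by move=> _ _ ppy /= -> _; rewrite orbC; apply/orP; left; apply/connectP; exists py.
case/lastP: py => [|py b].
  by move=> _ ppx _ /= <- _; apply/orP; left; apply/connectP; exists (rcons px a).
rewrite !size_rcons addSn addnS ltnS => sz.
rewrite !rcons_path !last_rcons => /andP[ppx ea] /andP[ppy eb] eab pU.
subst b.
have e := indeg_uniq ea eb pU.
apply: (IH x y px py) => //.
- by apply: leq_trans sz; apply: ltnW.
- exact: arc_notU ea.
Qed.

Lemma chain p x y : p \notin U -> connect E x p -> connect E y p ->
  connect E x y || connect E y x.
Proof.
move=> pU /connectP[px ppx lx] /connectP[py ppy ly].
apply: (chain_aux (leqnn _) ppx ppy); by rewrite -lx -?ly.
Qed.

Definition inA x := connect E x r || connect E r x.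

Lemma r_notU : r \notin U.
Proof.
apply/negP => rU; case/card_gt1P: U2 => u1 [u2 [u1U u2U]].
have := sink_conn (U_sink rU) (hr u1U); have := sink_conn (U_sink rU) (hr u2U).
by move=> -> ->; rewrite eqxx.
Qed.

Lemma U_inA u : u \in U -> inA u.
Proof. by move=> uU; rewrite /inA hr ?orbT. Qed.

Lemma arc_neq y u : E y u -> y != u.
Proof. by case: tree => irr _ _ _ e; apply/eqP => eyu; move: e; rewrite eyu irr. Qed.

Lemma key u v : u \in U -> connect E v u -> v != u -> connect (Rz u) v r -> inA v.
Proof.
move=> uU vu vnu vr.
case: (last_step vu vnu) => y vy eyu.
have rnu : r != u by apply/eqP => eru; move: r_notU; rewrite eru uU.
case: (last_step (hr uU) rnu) => p rp epu.
have yp : connect (Rz u) y p.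
  apply: connect_trans (_ : connect (Rz u) v p).
    by rewrite (sym_connect_sym (@Rz_sym u)) connE_Rz ?arc_neq.
  apply: connect_trans vr _.
  by rewrite connE_Rz ?arc_neq.
have eyp := tree_lemma eyu epu yp; subst p.
have := chain (arc_notU eyu) vy rp.
by rewrite /inA.
Qed.

Lemma inA_Rz z x : z \in U -> inA x -> x != z -> connect (Rz z) x r.
Proof.
move=> zU /orP[xr|rx] xz.
  by apply: connE_Rz => //; apply/eqP => erz; move: r_notU; rewrite erz zU.
by rewrite (sym_connect_sym (@Rz_sym z)) connE_Rz.
Qed.

Lemma A_arc v v' : E v v' -> inA v -> inA v'.
Proof.
move=> e /orP[vr|rv]; last by rewrite /inA (connect_trans rv (connect1 e)) orbT.
case: (boolP (v' \in U)) => v'U; first exact: U_inA.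
case: (reachU v') => u uU v'u.
have v'nu : v' != u by apply/eqP => eq; move: v'U; rewrite eq uU.
apply: (key uU v'u v'nu).
apply: (connect_trans (_ : connect (Rz u) v' v)).
  apply: connect1; rewrite /Rz /adj e orbT v'nu /=.
  by apply/eqP => evu; move: (arc_notU e); rewrite evu uU.
apply: inA_Rz => //; first by rewrite /inA vr.
by apply/eqP => evu; move: (arc_notU e); rewrite evu uU.
Qed.

Definition d v := absz (H - h v).
Definition k := (\max_(v : V) d v).+1.
Definition ht (i : nat) : int := (H - Posz k + 1 + Posz i)%R.
Definition a v i : nat :=
  if [pick x | inA x && connect E x v && (h x == ht i)] is Some x then enum_rank x else 0.
Definition W v := mkseq (a v) (k - d v).

Lemma dE v : Posz (d v) = (H - h v)%R.
Proof. have := h_le v; rewrite /d; lia. Qed.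

Lemma d_lt_k v : d v < k.
Proof. by rewrite /k ltnS (@leq_bigmax _ d v). Qed.

Lemma arc_d v v' : E v v' -> d v = (d v').+1.
Proof. move=> e; have := dE v; have := dE v'; have := hf e; lia. Qed.

Lemma U_d v : v \in U -> d v = 0.
Proof. move=> vU; have := dE v; rewrite HU //; lia. Qed.

Lemma notU_d v : v \notin U -> 0 < d v.
Proof. move=> vU; have := dE v; have := h_lt vU; lia. Qed.

Lemma ht_d v : ht (k - d v).-1 = h v.
Proof. have := dE v; have := d_lt_k v; rewrite /ht; lia. Qed.

Lemma a_self v : inA v -> a v (k - d v).-1 = enum_rank v.
Proof.
move=> Av; rewrite /a ht_d; case: pickP => [x /andP[/andP[_ xv] /eqP hx]|].
  by rewrite (conn_eqh xv hx).
by move/(_ v); rewrite Av connect0 eqxx.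
Qed.

Lemma a_lt v i : a v i < #|V|.
Proof.
rewrite /a; case: pickP => [x _|_]; first exact: ltn_ord.
exact: (leq_ltn_trans (leq0n _) (ltn_ord (enum_rank r))).
Qed.

Lemma size_W v : size (W v) = k - d v.
Proof. by rewrite size_mkseq. Qed.

Lemma W_last v : inA v -> nth 0 (W v) (k - d v).-1 = enum_rank v.
Proof.
move=> Av; rewrite nth_mkseq ?a_self //.
have := d_lt_k v; lia.
Qed.

Lemma W_arc v v' : E v v' -> inA v -> inA v' -> W v' = rcons (W v) (enum_rank v').
Proof.
move=> e Av Av'; rewrite /W.
have -> : k - d v' = (k - d v).+1 by have := arc_d e; have := d_lt_k v; lia.
rewrite mkseqS.
have -> : a v' (k - d v) = enum_rank v'.
  by rewrite -a_self //; congr a; have := arc_d e; have := d_lt_k v; lia.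
congr rcons; apply/eq_in_map => i; rewrite mem_iota add0n => /andP[_ ilt].
rewrite /a; congr (match _ with Some x => _ | None => _ end).
apply: eq_pick => x /=.
case: (boolP (inA x)) => //= Ax.
case: (boolP (h x == ht i)); rewrite ?andbF ?andbT //= => /eqP hx.
have hlt : (h x < h v')%R.
  rewrite hx /ht; have := dE v; have := hf e; lia.
apply/idP/idP => [xv'|xv]; last exact: connect_trans xv (connect1 e).
have xnv' : x != v' by apply/eqP => ex; rewrite ex ltxx in hlt.
case: (last_step xv' xnv') => y xy ey.
suff -> : v = y by [].
case: (boolP (v' \in U)) => v'U; last exact: indeg_uniq e ey v'U.
apply: (tree_lemma e ey).
apply: (connect_trans (inA_Rz v'U Av (arc_neq e))).
rewrite (sym_connect_sym (@Rz_sym v')).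
apply: (connect_trans _ (inA_Rz v'U Ax xnv')).
by rewrite (sym_connect_sym (@Rz_sym v')) connE_Rz ?arc_neq.
Qed.

Definition uB v := odflt v [pick u | (u \in U) && connect E v u].
Definition jB v := odflt v [pick x | connect E v x && E x (uB v)].

Lemma notA_notU v : ~~ inA v -> v \notin U.
Proof. by apply: contra => /U_inA. Qed.

Lemma uB_spec v : uB v \in U /\ connect E v (uB v).
Proof.
rewrite /uB; case: pickP => [u /andP[? ?] //|] /=.
by case: (reachU v) => u uU vu /(_ u); rewrite uU vu.
Qed.

Lemma uB_uniq v u : ~~ inA v -> u \in U -> connect E v u -> u = uB v.
Proof.
move=> Av uU vu; apply/eqP/negPn/negP => une.
case: (uB_spec v) => u'U vu'.
have vnu : v != u by apply/eqP => evu; move: (notA_notU Av); rewrite evu uU.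
move/negP: Av; apply; apply: (key uU vu vnu).
apply: (connect_trans (_ : connect (Rz u) v (uB v))).
  by rewrite connE_Rz // eq_sym.
rewrite (sym_connect_sym (@Rz_sym u)) connE_Rz //; first exact: hr.
by rewrite eq_sym.
Qed.

Lemma jB_spec v : ~~ inA v -> connect E v (jB v) /\ E (jB v) (uB v).
Proof.
move=> Av; rewrite /jB; case: pickP => [x /andP[? ?] //|] /=.
case: (uB_spec v) => uU vu.
have vnu : v != uB v by apply/eqP => evu; move: (notA_notU Av); rewrite {1}evu uU.
by case: (last_step vu vnu) => y vy ey /(_ y); rewrite vy ey.
Qed.

Lemma jB_uniq v x : ~~ inA v -> connect E v x -> E x (uB v) -> x = jB v.
Proof.
move=> Av vx ex; case: (jB_spec Av) => vj ej; case: (uB_spec v) => uU _.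
apply: (tree_lemma ex ej).
apply: (connect_trans (_ : connect (Rz (uB v)) x v)).
  by rewrite (sym_connect_sym (@Rz_sym _)) connE_Rz ?arc_neq.
by rewrite connE_Rz ?arc_neq.
Qed.

Lemma B_arc_B v v' : E v v' -> ~~ inA v -> ~~ inA v' -> uB v' = uB v /\ jB v' = jB v.
Proof.
move=> e Av Av'; case: (uB_spec v') => uU v'u.
have eu : uB v' = uB v by apply: uB_uniq => //; apply: connect_trans (connect1 e) v'u.
split => //; case: (jB_spec Av') => vj ej.
by apply: jB_uniq => //; [apply: connect_trans (connect1 e) vj | rewrite -eu].
Qed.

Lemma B_arc_A v v' : E v v' -> ~~ inA v -> inA v' -> v' \in U /\ uB v = v'.
Proof.
move=> e Av Av'.
have v'U : v' \in U.
  apply/negPn/negP => v'U; move: Av; rewrite /inA.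
  case/orP: Av' => [v'r|rv'].
    by rewrite (connect_trans (connect1 e) v'r).
  by move/negP; apply; apply: (chain v'U (connect1 e) rv').
by split => //; symmetry; apply: uB_uniq => //; apply: connect1.
Qed.

Definition f v : seq nat * nat * nat :=
  if inA v then (W v, 0, 0) else (W (uB v), (enum_rank (jB v) : nat), d v).

Lemma embed : embeds_in_T E k #|V|.
Proof.
have l0 : 0 < #|V| by apply: (leq_ltn_trans (leq0n _) (ltn_ord (enum_rank r))).
have allW w : all (fun i => i < #|V|) (W w).
  by apply/allP => x /mapP[i _ ->]; apply: a_lt.
have fV v : Tvert k #|V| (f v).
  rewrite /f /Tvert; case: (boolP (inA v)) => Av /=.
  by rewrite allW size_W leq_subr.
rewrite allW size_W U_d ?subn0 ?leqnn; last by case: (uB_spec v).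
have -> : (d v == 0) = false by apply: negbTE; rewrite -lt0n notU_d ?notA_notU.
by rewrite eqxx ltn_ord /= ltnW // d_lt_k.
exists f; split => //.
- move=> v v'; rewrite /f.
  case: (boolP (inA v)) => Av; case: (boolP (inA v')) => Av' //.
  + case=> eW.
    have ed : d v = d v'.
      have := size_W v; have := size_W v'; rewrite eW => -> .
      have := d_lt_k v; have := d_lt_k v'; lia.
    have := W_last Av; rewrite eW ed W_last // => /ord_inj.
    by move/enum_rank_inj.
  + by case=> _ _ ed; move: (notU_d (notA_notU Av')); rewrite -ed.
  + by case=> _ _ ed; move: (notU_d (notA_notU Av)); rewrite ed.
  + case=> _ /ord_inj /enum_rank_inj ej ed.
    case: (jB_spec Av) => vj ej1; case: (jB_spec Av') => v'j ej2.
    have hv : h v = h v' by have := dE v; have := dE v'; rewrite ed; lia.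
    have v'j' : connect E v' (jB v) by rewrite ej.
    case/orP: (chain (arc_notU ej1) vj v'j').
      by move=> vv'; apply: conn_eqh.
    by move=> v'v; apply/esym/conn_eqh.
- move=> v v' e; split; first exact: fV; split; first exact: fV.
  rewrite /f; case: (boolP (inA v)) => Av; case: (boolP (inA v')) => Av' /=.
  + apply: Or31; split=> //; split=> //; exists (enum_rank v'); first exact: ltn_ord.
    exact: W_arc.
  + by move: Av'; rewrite (A_arc e Av).
  + case: (B_arc_A e Av Av') => v'U ->; apply: Or32; split=> //.
    by rewrite (arc_d e) U_d.
  + case: (B_arc_B e Av Av') => -> ->; apply: Or33; split=> //.
      by rewrite notU_d ?notA_notU.
    by rewrite (arc_d e).
Qed.

End Pf.

Theorem lemma3p1 (V : finType) (E : rel V) :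
  oriented_tree E ->
  grounded E ->
  out_arborescence_on E (min_subtree E (Uset E)) ->
  2 <= #|Uset E| ->
  (forall v, leaf E v -> indeg E v != 1) ->
  exists k l, [/\ 1 <= k, 1 <= l & embeds_in_T E k l].
Proof.
move=> tree [h [hf hU]] [r rS rreach] U2 leafh.
case/card_gt1P: (U2) => u0 [_ [u0U _ _]].
have HU : forall u, u \in Uset E -> h u = h u0 by move=> u uU; apply: hU.
have hr : forall u, u \in Uset E -> connect E r u.
  move=> u uU.
  have uS : u \in min_subtree E (Uset E).
    by apply/bigcapP => W /andP[sub _]; apply: (subsetP sub).
  apply: connect_sub (rreach u uS) => x y /and3P[_ _ exy]; exact: connect1.
exists (k h (h u0)), #|V|; split => //.
- exact: (leq_ltn_trans (leq0n _) (ltn_ord (enum_rank r))).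
- exact: (embed tree hf HU hr U2 leafh).
Qed.
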